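(* Let $n\ge2$, $w\in\widetilde{S}_n^\circ$ with $t$-coordinates $(t_1,\dots,t_{n-1})$, and fix $1\le i\le n-1$. Let $j$ be the largest integer $j\ge1$ with $w(i+1)>w(i+jn)$ if such $j$ exists, and $j=0$ otherwise. Then $t_i$ equals the number of window boundaries between positions $i+1$ and $i+jn$, i.e. the number of integers $r$ with $i+1\le rn< i+jn$ (this is $0$ when $j=0$).
   Context: An affine permutation of size $n$ is a bijection $w:\mathbb{Z}\to\mathbb{Z}$ with $w(i+n)=w(i)+n$ for all $i$ and $w(1)+\cdots+w(n)=\binom{n+1}{2}$, base window $[w_1,\dots,w_n]=[w(1),\dots,w(n)]$. $\widetilde{S}_n^\circ$ is the set of such $w$ with $w_1<\cdots<w_n$. For $w\in\widetilde{S}_n^\circ$, an integer is a bead if it equals $w_j-mn$ for some $j$ and integer $m\ge0$, a gap otherwise; the gap vector $\dot g(w)=(g_1,\dots,g_{n-1})$ has $g_i$ = number of gaps strictly between $w_i$ and $w_{i+1}$. $\mathsf{BIAS}_n$ is the set of $w\in\widetilde{S}_n^\circ$ with all $w_{i+1}-w_i\in\{1,\dots,n-1\}$; the bias of $w\in\widetilde{S}_n^\circ$ is the unique $b\in\mathsf{BIAS}_n$ with $b_{i+1}-b_i\equiv w_{i+1}-w_i\pmod n$ for all $i$. The $t$-coordinates of $w$ are the unique $t\in\mathbb{Z}_{\ge0}^{n-1}$ with $\dot g(w)=(t_1,2t_2,\dots,(n-1)t_{n-1})+\dot g(b)$, $b$ the bias of $w$ (this $t$ exists and is unique). Window boundaries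 lie between positions $rn$ and $rn+1$ for $r\in\mathbb{Z}$. *)

(* Defs.v *)
From HB Require Import structures.
From mathcomp Require Import all_boot all_order all_algebra.
Set Implicit Arguments. Unset Strict Implicit. Unset Printing Implicit Defensive.
Import Order.TTheory GRing.Theory Num.Theory.
Local Open Scope ring_scope.

Definition affine_perm (n : nat) (w : int -> int) : Prop :=
  bijective w /\
  (forall i : int, w (i + n%:Z) = w i + n%:Z) /\
  \sum_(1 <= k < n.+1) w k%:Z = ('C(n.+1, 2))%:Z.

Definition Sncirc (n : nat) (w : int -> int) : Prop :=
  affine_perm n w /\
  (forall k : nat, (1 <= k)%N -> (k < n)%N -> w k%:Z < w k.+1%:Z).

(* x is a bead of w iff x = w_j - m n for some 1 <= j <= n and integer m >= 0,
   i.e. x <= w_j and n divides w_j - x. *)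
Definition beadb (n : nat) (w : int -> int) (x : int) : bool :=
  has (fun j : nat => (x <= w j%:Z) && (n%:Z %| (w j%:Z - x))%Z) (iota 1 n).

Definition gapcount (n : nat) (w : int -> int) (k : nat) : nat :=
  count (fun x => ~~ beadb n w x)
    [seq w k%:Z + m%:Z | m <- iota 1 (absz (w k.+1%:Z - w k%:Z)).-1].

Definition BIAS (n : nat) (b : int -> int) : Prop :=
  Sncirc n b /\
  (forall k : nat, (1 <= k)%N -> (k < n)%N ->
     1 <= b k.+1%:Z - b k%:Z <= (n.-1)%:Z).

Definition bias_of (n : nat) (w b : int -> int) : Prop :=
  BIAS n b /\
  (forall k : nat, (1 <= k)%N -> (k < n)%N ->
     (b k.+1%:Z - b k%:Z = w k.+1%:Z - w k%:Z %[mod n%:Z])%Z).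

Definition is_tcoords (n : nat) (w : int -> int) (t : nat -> nat) : Prop :=
  exists b, bias_of n w b /\
    (forall k : nat, (1 <= k)%N -> (k < n)%N ->
       gapcount n w k = (k * t k + gapcount n b k)%N).

Definition is_jmax (n : nat) (w : int -> int) (i j : nat) : Prop :=
  (j = 0%N /\ forall k : nat, (1 <= k)%N -> ~ (w (i + k * n)%N%:Z < w i.+1%:Z))
  \/
  ((1 <= j)%N /\ w (i + j * n)%N%:Z < w i.+1%:Z /\
   forall k : nat, (j < k)%N -> ~ (w (i + k * n)%N%:Z < w i.+1%:Z)).

(* number of integers r with i+1 <= r n < i + j n (such r are positive and
   smaller than i + j n, so we range over r in [0, i + j n)). *)
Definition boundaries (n i j : nat) : nat :=
  count (fun r : nat => (i.+1 <= r * n)%N && (r * n < i + j * n)%N)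
        (iota 0 (i + j * n)).

(* Main.v *)
Require Import Defs.
From mathcomp Require Import all_boot all_order all_algebra zify.
Import Order.TTheory GRing.Theory Num.Theory.
Set Implicit Arguments. Unset Strict Implicit.
Local Open Scope ring_scope.

Lemma dvdz_ex (d x : int) : (d %| x)%Z -> exists q : int, x = q * d.
Proof. by case/dvdzP=> q ->; exists q. Qed.

Lemma dvdz_shift (d X Y m : int) :
  (d %| X - Y)%Z -> (d %| X - m)%Z = (d %| Y - m)%Z.
Proof.
move=> H; have -> : X - m = (X - Y) + (Y - m) by lia.
by rewrite rpredDl.
Qed.

Lemma per_nat (n : nat) (w : int -> int) :
  (forall i : int, w (i + n%:Z) = w i + n%:Z) ->
  forall (y : int) (m : nat), w (y + m%:Z * n%:Z) = w y + m%:Z * n%:Z.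
Proof.
move=> Hp y; elim=> [|m IH]; first by rewrite mul0r !addr0.
have -> : y + m.+1%:Z * n%:Z = (y + m%:Z * n%:Z) + n%:Z by lia.
rewrite Hp IH; lia.
Qed.

Lemma per_int (n : nat) (w : int -> int) :
  (forall i : int, w (i + n%:Z) = w i + n%:Z) ->
  forall (y m : int), w (y + m * n%:Z) = w y + m * n%:Z.
Proof.
move=> Hp y [k|k]; first exact: per_nat.
have := per_nat Hp (y + Negz k * n%:Z) k.+1.
have -> : y + Negz k * n%:Z + k.+1%:Z * n%:Z = y by rewrite NegzE; lia.
move=> ->; rewrite NegzE; lia.
Qed.

Lemma surj_res (n : nat) (w : int -> int) : (0 < n)%N -> affine_perm n w ->
  forall x : int, exists c : nat,
    [/\ (1 <= c)%N, (c <= n)%N & exists m : int, x = w c%:Z + m * n%:Z].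
Proof.
move=> n0 [[g wg gw] [Hp _]] x.
set y := g x.
have Hx : x = w y by rewrite /y gw.
have Hdiv := divz_eq (y - 1) n%:Z.
have Hn : (n%:Z != 0) by rewrite eqz_nat -lt0n.
have H0 := modz_ge0 (y - 1) Hn.
have H1 : ((y - 1) %% n%:Z)%Z < n%:Z by apply: ltz_pmod; rewrite ltz_nat.
set r := ((y - 1) %% n%:Z)%Z in Hdiv H0 H1.
set q := ((y - 1) %/ n%:Z)%Z in Hdiv.
exists (absz r).+1; split; [by [] | lia |].
exists q; rewrite Hx -per_int //.
congr w; lia.
Qed.

Lemma inj_res (n : nat) (w : int -> int) : affine_perm n w ->
  forall (c c' : nat) (m : int), (1 <= c)%N -> (c <= n)%N -> (1 <= c')%N -> (c' <= n)%N ->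
  w c%:Z = w c'%:Z + m * n%:Z -> c = c'.
Proof.
move=> [[g wg gw] [Hp _]] c c' m H1 H2 H3 H4 E.
rewrite -per_int // in E.
have E' := can_inj wg E.
have [m0|[m1|m2]] : m <= -1 \/ m = 0 \/ 1 <= m by lia.
- nia.
- subst m; lia.
- nia.
Qed.

Lemma inj_dvd (n : nat) (w : int -> int) : affine_perm n w ->
  forall (c c' : nat), (1 <= c)%N -> (c <= n)%N -> (1 <= c')%N -> (c' <= n)%N ->
  (n%:Z %| w c%:Z - w c'%:Z)%Z -> c = c'.
Proof.
move=> A c c' H1 H2 H3 H4 /dvdz_ex [m E].
have E' : w c%:Z = w c'%:Z + m * n%:Z by lia.
exact: (inj_res A H1 H2 H3 H4 E').
Qed.

Lemma mono_le (n : nat) (w : int -> int) :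
  (forall k : nat, (1 <= k)%N -> (k < n)%N -> w k%:Z < w k.+1%:Z) ->
  forall (d a : nat), (1 <= a)%N -> (a + d <= n)%N ->
    w a%:Z <= w (a + d)%N%:Z /\ ((0 < d)%N -> w a%:Z < w (a + d)%N%:Z).
Proof.
move=> Hm; elim=> [|d IH] a H1 H2; first by rewrite addn0.
have H2' : (a + d <= n)%N by lia.
have [IH1 _] := IH a H1 H2'.
have H1' : (1 <= a + d)%N by lia.
have H3' : (a + d < n)%N by lia.
have Hs := Hm (a + d)%N H1' H3'.
rewrite addnS; split => [|_]; lia.
Qed.

Lemma mono2 (n : nat) (w : int -> int) :
  (forall k : nat, (1 <= k)%N -> (k < n)%N -> w k%:Z < w k.+1%:Z) ->
  forall (a b : nat), (1 <= a)%N -> (b <= n)%N -> (a <= b)%N ->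
    w a%:Z <= w b%:Z /\ ((a < b)%N -> w a%:Z < w b%:Z).
Proof.
move=> Hm a b H1 H2 H3.
have Hb : (a + (b - a) <= n)%N by lia.
have := mono_le Hm H1 Hb.
rewrite subnKC // => [[A B]]; split => // ab; apply: B; lia.
Qed.

Lemma gap_char (n : nat) (u : int -> int) (k : nat) (x : int) :
  (0 < n)%N -> Sncirc n u -> (1 <= k)%N -> (k < n)%N ->
  u k%:Z < x -> x < u k.+1%:Z ->
  (~~ beadb n u x) = has (fun c : nat => (n%:Z %| u c%:Z - x)%Z) (iota 1 k).
Proof.
move=> n0 [A Hm] k1 kn Hx1 Hx2.
apply/idP/idP.
- move=> nb.
  have [c [c1 cn [m E]]] := surj_res n0 A x.
  apply/hasP; exists c.
    rewrite mem_iota; apply/andP; split; first by [].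
    have [ck|ck] := leqP c k; first lia.
    have [M _] := mono2 Hm (a := k.+1) (b := c) ltac:(lia) cn ck.
    exfalso; move/negP: nb; apply; apply/hasP; exists c; first by rewrite mem_iota; lia.
    apply/andP; split; first lia.
    apply/dvdzP; exists (- m); lia.
  apply/dvdzP; exists (- m); lia.
- case/hasP=> c; rewrite mem_iota => /andP [c1 ck] Hc.
  apply/negP; rewrite /beadb => /hasP [j]; rewrite mem_iota => /andP [j1 jn] /andP [xj Hj].
  have Hjc : (n%:Z %| u j%:Z - u c%:Z)%Z.
    have -> : u j%:Z - u c%:Z = (u j%:Z - x) - (u c%:Z - x) by lia.
    exact: rpredB.
  have ejc := inj_dvd A j1 ltac:(lia) c1 ltac:(lia) Hjc.
  subst j.
  have [M _] := mono2 Hm (a := c) (b := k) c1 ltac:(lia) ltac:(lia).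
  lia.
Qed.

Definition Pm (n : nat) (u : int -> int) (k : nat) (m : nat) : bool :=
  has (fun c : nat => (n%:Z %| u c%:Z - u k%:Z - m%:Z)%Z) (iota 1 k).

Lemma gap_formula (n : nat) (u : int -> int) (k : nat) :
  (0 < n)%N -> Sncirc n u -> (1 <= k)%N -> (k < n)%N ->
  gapcount n u k = count (Pm n u k) (iota 1 (absz (u k.+1%:Z - u k%:Z)).-1).
Proof.
move=> n0 S k1 kn.
have Hlt := (S.2 k k1 kn).
rewrite /gapcount count_map; apply: eq_in_count => m; rewrite mem_iota => /andP [m1 m2].
rewrite /preim /= /Pm (gap_char n0 S k1 kn); [|lia|lia].
apply: eq_in_has => c _ /=; by rewrite opprD addrA.
Qed.

Lemma count_periodic (n : nat) (P : nat -> bool) :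
  (forall m, P (m + n)%N = P m) ->
  forall q s : nat, count P (iota 1 (q * n + s)) = (q * count P (iota 1 n) + count P (iota 1 s))%N.
Proof.
move=> HP; elim=> [|q IH] s; first by rewrite mul0n.
rewrite mulSn -addnA iotaD count_cat (addnC 1%N n) iotaDl count_map.
have -> : count (preim (addn n) P) (iota 1 (q * n + s)) = count P (iota 1 (q * n + s)).
  by apply: eq_count => m /=; rewrite addnC HP.
by rewrite IH mulSn addnA.
Qed.

Lemma count_one (n : nat) (a : int) : (0 < n)%N ->
  count (fun m : nat => (n%:Z %| a - m%:Z)%Z) (iota 1 n) = 1%N.
Proof.
move=> n0.
have Hdiv := divz_eq (a - 1) n%:Z.
have Hn : (n%:Z != 0) by rewrite eqz_nat -lt0n.
have H0 := modz_ge0 (a - 1) Hn.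
have H1 : ((a - 1) %% n%:Z)%Z < n%:Z by apply: ltz_pmod; rewrite ltz_nat.
set r := ((a - 1) %% n%:Z)%Z in Hdiv H0 H1.
set q := ((a - 1) %/ n%:Z)%Z in Hdiv.
set m0 := (absz r).+1.
have -> : count (fun m : nat => (n%:Z %| a - m%:Z)%Z) (iota 1 n) = count_mem m0 (iota 1 n).
  apply: eq_in_count => m; rewrite mem_iota => /andP [m1 m2] /=.
  apply/idP/eqP.
  - case/dvdz_ex => z Hz.
    have [z0|[z1|z2]] : q - z <= -1 \/ z = q \/ 1 <= q - z by lia.
    + nia.
    + subst z; lia.
    + nia.
  - move=> ->; apply/dvdzP; exists q; lia.
rewrite count_uniq_mem ?iota_uniq // mem_iota; lia.
Qed.

Lemma count_res (n : nat) (e : nat -> int) : (0 < n)%N ->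
  (forall c c' : nat, (1 <= c)%N -> (c <= n)%N -> (1 <= c')%N -> (c' <= n)%N ->
     (n%:Z %| e c - e c')%Z -> c = c') ->
  forall k : nat, (k <= n)%N ->
  count (fun m : nat => has (fun c : nat => (n%:Z %| e c - m%:Z)%Z) (iota 1 k)) (iota 1 n) = k.
Proof.
move=> n0 He; elim=> [|k IH] kn.
  by rewrite /= count_pred0.
have IH' := IH (ltnW kn).
have -> : iota 1 k.+1 = iota 1 k ++ iota (1 + k) 1 by rewrite -iotaD addn1.
have -> : count (fun m : nat => has (fun c : nat => (n%:Z %| e c - m%:Z)%Z) (iota 1 k ++ iota (1 + k) 1)) (iota 1 n)
   = count (predU (fun m : nat => has (fun c : nat => (n%:Z %| e c - m%:Z)%Z) (iota 1 k))
                  (fun m : nat => (n%:Z %| e k.+1 - m%:Z)%Z)) (iota 1 n).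
  by apply: eq_count => m; rewrite has_cat /= orbF add1n.
have := count_predUI (fun m : nat => has (fun c : nat => (n%:Z %| e c - m%:Z)%Z) (iota 1 k))
                  (fun m : nat => (n%:Z %| e k.+1 - m%:Z)%Z) (iota 1 n).
rewrite IH' count_one //.
have -> : count (predI (fun m : nat => has (fun c : nat => (n%:Z %| e c - m%:Z)%Z) (iota 1 k))
                  (fun m : nat => (n%:Z %| e k.+1 - m%:Z)%Z)) (iota 1 n) = 0%N.
  apply/eqP; rewrite -leqn0 leqNgt -has_count; apply/hasP => [[m _ /= /andP [/hasP [c]]]].
  rewrite mem_iota => /andP [c1 ck] Hc Hk.
  have Hck : (n%:Z %| e c - e k.+1)%Z.
    have -> : e c - e k.+1 = (e c - m%:Z) - (e k.+1 - m%:Z) by lia.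
    exact: rpredB.
  have := He c k.+1 c1 ltac:(lia) ltac:(lia) kn Hck; lia.
rewrite addn0 => ->; lia.
Qed.

Lemma Pm_periodic (n : nat) (u : int -> int) (k : nat) :
  forall m, Pm n u k (m + n)%N = Pm n u k m.
Proof.
move=> m; apply: eq_in_has => c _ /=.
have -> : u c%:Z - u k%:Z - (m + n)%N%:Z = (u c%:Z - u k%:Z - m%:Z) + (- n%:Z) by lia.
by rewrite rpredDr // rpredN dvdzz.
Qed.

Lemma telescope (n : nat) (w b : int -> int) : bias_of n w b ->
  forall c : nat, (1 <= c)%N -> (c <= n)%N ->
  (n%:Z %| (w c%:Z - b c%:Z) - (w 1 - b 1))%Z.
Proof.
move=> [_ Hc]; elim=> [|c IH] // c1 cn.
have [c0|c0] := posnP c.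
  by subst c; rewrite subrr dvdz0.
have IH' := IH c0 (ltnW cn).
have := Hc c c0 cn; move/eqP; rewrite eqz_mod_dvd => H.
have -> : w c.+1%:Z - b c.+1%:Z - (w 1 - b 1)
  = (w c%:Z - b c%:Z - (w 1 - b 1)) - (b c.+1%:Z - b c%:Z - (w c.+1%:Z - w c%:Z)) by lia.
exact: rpredB.
Qed.

Lemma gap_main (n : nat) (w b : int -> int) (k : nat) :
  (2 <= n)%N -> Sncirc n w -> bias_of n w b -> (1 <= k)%N -> (k < n)%N ->
  exists q : nat,
    gapcount n w k = (k * q + gapcount n b k)%N /\
    w k.+1%:Z - w k%:Z = q%:Z * n%:Z + (b k.+1%:Z - b k%:Z) /\
    1 <= b k.+1%:Z - b k%:Z <= (n.-1)%:Z.
Proof.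
move=> n2 Sw Bb k1 kn.
have n0 : (0 < n)%N by lia.
have [[Sb _] Hcong] := Bb.
have Sb' := Sb.
case: Sb' => [Ab Hb]; case: Sw => [Aw Hw] .
have Sw : Sncirc n w by [].
have Hr := (Bb.1.2 k k1 kn).
have Dpos := Hw k k1 kn.
have := Hcong k k1 kn; move/eqP; rewrite eqz_mod_dvd => /dvdz_ex [z Hz].
have q0 : 0 <= - z.
  have [z0|z0] : 0 <= - z \/ - z <= -1 by lia. by []. nia.
exists (absz (- z)).
have Eq : w k.+1%:Z - w k%:Z = (absz (- z))%:Z * n%:Z + (b k.+1%:Z - b k%:Z).
  rewrite abszE ger0_norm //; lia.
split; last by split.
rewrite (gap_formula n0 Sw k1 kn) (gap_formula n0 Sb k1 kn).
have -> : (`|w k.+1%:Z - w k%:Z|.-1 = absz (- z) * n + (`|b k.+1%:Z - b k%:Z|.-1))%N by lia.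
rewrite count_periodic; last exact: Pm_periodic.
have -> : count (Pm n w k) (iota 1 n) = k.
  rewrite /Pm (count_res (e := fun c : nat => w c%:Z - w k%:Z)) //; last exact: ltnW.
  move=> c c' c1 cn' c'1 c'n Hd; apply: (inj_dvd Aw) => //.
  have -> : w c%:Z - w c'%:Z = w c%:Z - w k%:Z - (w c'%:Z - w k%:Z) by lia.
  exact: Hd.
rewrite mulnC; congr (_ + _)%N.
apply: eq_in_count => m _; rewrite /Pm; apply: eq_in_has => c; rewrite mem_iota => /andP [c1 ck].
apply: dvdz_shift.
have -> : w c%:Z - w k%:Z - (b c%:Z - b k%:Z) =
   (w c%:Z - b c%:Z - (w 1 - b 1)) - (w k%:Z - b k%:Z - (w 1 - b 1)) by lia.
apply: rpredB; apply: (telescope Bb); lia.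
Qed.

Lemma bound_count (n i q : nat) : (2 <= n)%N -> (1 <= i)%N -> (i < n)%N ->
  boundaries n i q = q.
Proof.
move=> n2 i1 iin; rewrite /boundaries.
have -> : count (fun r : nat => (i.+1 <= r * n)%N && (r * n < i + q * n)%N) (iota 0 (i + q * n))
  = count (fun r : nat => (0 < r)%N && (r <= q)%N) (iota 0 (i + q * n)).
  apply: eq_count => r /=.
  have [r0|r0] := posnP r; first by subst r; rewrite mul0n.
  have [rq|rq] := leqP r q.
    apply/andP; split; nia.
  rewrite andbF; apply/negbTE; rewrite negb_and; apply/orP; right; rewrite -leqNgt; nia.
have -> : (i + q * n = 1 + (q + (i + q * n - q - 1)))%N by nia.
rewrite !iotaD !count_cat /= add0n.
have -> : count (fun r : nat => (0 < r)%N && (r <= q)%N) (iota 1 q) = q.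
  rewrite (eq_in_count (a2 := predT)) ?count_predT ?size_iota //.
  move=> r; rewrite mem_iota => /andP [r1 r2] /=; apply/andP; split; lia.
rewrite (eq_in_count (a2 := pred0)) ?count_pred0 ?addn0 //.
move=> r; rewrite mem_iota => /andP [r1 r2] /=; apply/negbTE; rewrite negb_and; apply/orP; right; rewrite -ltnNge; lia.
Qed.



Theorem mainTheorem6 (n : nat) (w : int -> int) (t : nat -> nat) (i j : nat) :
  (2 <= n)%N -> Sncirc n w -> is_tcoords n w t ->
  (1 <= i)%N -> (i <= n.-1)%N -> is_jmax n w i j ->
  t i = boundaries n i j.
Proof.
move=> n2 Sw [b [Bb Ht]] i1 iin Hj.
have iln : (i < n)%N by lia.
have [q [Hg [HD Hr]]] := gap_main n2 Sw Bb i1 iln.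
have tq : t i = q.
  have := Ht i i1 iln; rewrite Hg => /eqP; rewrite eqn_add2r eqn_pmul2l // => /eqP //.
have key : forall k : nat, (w (i + k * n)%N%:Z < w i.+1%:Z)%R = (k <= q)%N.
  move=> k.
  have -> : ((i + k * n)%N)%:Z = (i%:Z + k%:Z * n%:Z)%R by lia.
  rewrite per_nat; last by case: Sw => [[_ [Hp _]] _].
  have [kq|kq] := leqP k q.
    apply/idP; nia.
  apply/negbTE; rewrite -leNgt; nia.
have jq : j = q.
  case: Hj => [[j0 H]|[j1 [Hjl H]]].
    have [q0|q0] := posnP q; first by rewrite j0 q0.
    by exfalso; apply: (H q q0); rewrite key.
  rewrite key in Hjl.
  have [jq|jq] := ltnP j q; last by apply/eqP; rewrite eqn_leq Hjl jq.
  by exfalso; apply: (H q jq); rewrite key.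
rewrite tq jq bound_count //.
Qed.
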